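(* Let $p$ be an odd prime and $M$ the sub-add move matrix. Then every directed cycle in $\Gamma_{M,\,p}$ has length $1$, $s$ or $k$ (where $s$ and $k$ need not be distinct).
   Context: The sub-add move matrix is $M=\begin{pmatrix}1&-1\\1&1\end{pmatrix}$. For $n\in\mathbb N$, $\Gamma_{M,\,n}$ is the directed graph with vertex set $\mathbb Z_n^2$ and arcs $((a,b),(a-b,a+b))$ (mod $n$; loops allowed). A directed cycle is a cycle in the underlying undirected graph such that in the induced directed subgraph every vertex has in- and out-degree $1$; a loop is a directed $1$-cycle, a pair of opposite arcs a directed $2$-cycle. Let $t$ be the multiplicative order of $-4$ in $GF(p)$ and $k=4t$ (which is the $\mathbb Z_p$-order of $M$, i.e. the least positive $k$ with $M^k\equiv I \bmod p$). Let $i\in GF(p^2)$ satisfy $i^2=-1$, the choice of square root of $-1$ being made so that ${\rm ord}(1-i)\le{\rm ord}(1+i)$ (multiplicative orders in $GF(p^2)$), and let $s={\rm ord}(1-i)$. *)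

(* Defs.v *)
From HB Require Import structures.
From mathcomp Require Import all_boot all_order all_algebra all_field.
Set Implicit Arguments. Unset Strict Implicit. Unset Printing Implicit Defensive.
Import GRing.Theory.
Local Open Scope ring_scope.

(* The sub-add move matrix M = [[1,-1],[1,1]] acting on column vectors (a,b)^T:
   M (a,b)^T = (a - b, a + b)^T.  Vertices of Gamma_{M,p} are pairs in Z_p^2. *)
Definition subadd_move (p : nat) (v : 'F_p * 'F_p) : 'F_p * 'F_p :=
  (v.1 - v.2, v.1 + v.2).

Definition Gamma_arc (p : nat) : rel ('F_p * 'F_p) :=
  fun x y => y == subadd_move x.

(* A loop is a 1-cycle, a pair of opposite arcs a 2-cycle. *)
Definition directed_cycle (T : eqType) (e : rel T) (c : seq T) : bool :=
  [&& c != [::], uniq c & cycle e c].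

(* Main.v *)
Require Import Defs.
From mathcomp Require Import all_boot all_order all_algebra all_field.
From mathcomp Require Import ring.
Import GRing.Theory.
Local Open Scope ring_scope.

Lemma nat_aux a b : (0 < a)%N -> (a %| 4 * b)%N -> (b %| 4 * a)%N -> (a <= b)%N -> (a %| b)%N.
Proof.
move=> a0 hab hba hle.
have b0 : (0 < b)%N by apply: leq_trans hle.
set g := gcdn a b.
have g0 : (0 < g)%N by rewrite gcdn_gt0 a0.
have [a' ea] : exists a', a = (a' * g)%N by exists (a %/ g)%N; rewrite divnK // dvdn_gcdl.
have [b' eb] : exists b', b = (b' * g)%N by exists (b %/ g)%N; rewrite divnK // dvdn_gcdr.
have cop : coprime a' b'.
  rewrite /coprime -(eqn_pmul2r g0) mul1n muln_gcdl -ea -eb //.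
move: hab hba hle; rewrite ea eb !mulnA !dvdn_pmul2r // leq_pmul2r //.
rewrite Gauss_dvdl // [(_ %| 4 * a')%N]Gauss_dvdl 1?coprime_sym // => ha hb hle.
have a'0 : (0 < a')%N by move: a0; rewrite ea muln_gt0 => /andP[].
have : (a' <= 4)%N by apply: dvdn_leq.
have : (b' <= 4)%N by apply: dvdn_leq.
clear ea eb; move: cop ha hb hle a'0.
case: a' => [|[|[|[|[|]]]]] //; case: b' => [|[|[|[|[|]]]]] //.
Qed.

Section S.
Variables (p : nat) (F : finFieldType) (charF : p \in [pchar F]).
Variables (pr_p : prime p) (odd_p : odd p) (i : F) (hi : i ^+ 2 = -1).
Definition e (a : 'F_p) : F := in_alg (pPrimeCharType charF) a.
Lemma eD a b : e (a + b) = e a + e b.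
Proof. exact: (rmorphD (in_alg (pPrimeCharType charF))). Qed.
Lemma eB a b : e (a - b) = e a - e b.
Proof. exact: (rmorphB (in_alg (pPrimeCharType charF))). Qed.
Lemma eX a n : e (a ^+ n) = e a ^+ n.
Proof. exact: (rmorphXn (in_alg (pPrimeCharType charF))). Qed.
Lemma eN a : e (- a) = - e a.
Proof. exact: (rmorphN (in_alg (pPrimeCharType charF))). Qed.
Lemma e1 : e 1 = 1.
Proof. exact: (rmorph1 (in_alg (pPrimeCharType charF))). Qed.
Lemma enat n : e n%:R = n%:R.
Proof. exact: (rmorph_nat (in_alg (pPrimeCharType charF))). Qed.
Lemma e_inj : injective e.
Proof. exact: (fmorph_inj (in_alg (pPrimeCharType charF))). Qed.

Lemma two_neq0 : (2%:R : F) != 0.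
Proof.
rewrite -(dvdn_pcharf charF); apply/negP => /(dvdn_leq (isT : (0 < 2)%N)).
have := prime_gt1 pr_p; case: p odd_p => [|[|[|]]] //.
Qed.

Lemma i_neq0 : i != 0.
Proof. apply/eqP => i0; move: hi; rewrite i0 expr0n /= => /eqP.
by rewrite eq_sym oppr_eq0 oner_eq0. Qed.

Let f := @subadd_move p.
Definition phi (v : 'F_p * 'F_p) := e v.1 + i * e v.2.
Definition psi (v : 'F_p * 'F_p) := e v.1 - i * e v.2.

Lemma phi_f v : phi (f v) = (1 + i) * phi v.
Proof. rewrite /phi /f /subadd_move /= eB eD; ring: hi. Qed.
Lemma psi_f v : psi (f v) = (1 - i) * psi v.
Proof. rewrite /psi /f /subadd_move /= eB eD; ring: hi. Qed.
Lemma phi_iter m v : phi (iter m f v) = (1 + i) ^+ m * phi v.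
Proof. elim: m => [|m IH] /=; first by rewrite mul1r. by rewrite phi_f IH exprS mulrA. Qed.
Lemma psi_iter m v : psi (iter m f v) = (1 - i) ^+ m * psi v.
Proof. elim: m => [|m IH] /=; first by rewrite mul1r. by rewrite psi_f IH exprS mulrA. Qed.

Lemma pp_inj v w : phi v = phi w -> psi v = psi w -> v = w.
Proof.
rewrite /phi /psi => h1 h2.
have E1 : 2%:R * e v.1 = 2%:R * e w.1.
  transitivity ((e v.1 + i * e v.2) + (e v.1 - i * e v.2)); first by ring.
  rewrite h1 h2; ring.
have E2 : (2%:R * i) * e v.2 = (2%:R * i) * e w.2.
  transitivity ((e v.1 + i * e v.2) - (e v.1 - i * e v.2)); first by ring.
  rewrite h1 h2; ring.
move/(mulfI two_neq0)/e_inj: E1; move/(mulfI (mulf_neq0 two_neq0 i_neq0))/e_inj: E2.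
by case: v {h1 h2} => a b; case: w => c d /= -> ->.
Qed.

Lemma iter_fix m v : (iter m f v == v) =
  ((((1 + i) ^+ m == 1) || (phi v == 0)) && (((1 - i) ^+ m == 1) || (psi v == 0))).
Proof.
apply/idP/idP.
  move/eqP => h.
  have h1 := phi_iter m v; have h2 := psi_iter m v; rewrite h in h1 h2.
  move/eqP: h1; rewrite -subr_eq0 -{1}[phi v]mul1r -mulrBl mulf_eq0 subr_eq0 eq_sym => ->.
  by move/eqP: h2; rewrite -subr_eq0 -{1}[psi v]mul1r -mulrBl mulf_eq0 subr_eq0 eq_sym => ->.
move=> /andP[h1 h2]; apply/eqP/pp_inj; rewrite ?phi_iter ?psi_iter.
  by case/orP: h1 => /eqP ->; rewrite ?mul1r ?mulr0.
by case/orP: h2 => /eqP ->; rewrite ?mul1r ?mulr0.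
Qed.


Lemma i_pow4 L : i ^+ L = 1 -> (4 %| L)%N.
Proof.
have i4 : i ^+ 4 = 1 by rewrite (_ : 4%N = (2 * 2)%N) // exprM hi; ring.
rewrite {1}(divn_eq L 4) exprD mulnC exprM i4 expr1n mul1r.
have two1 : (1 : F) != -1.
  apply/eqP => h; move: two_neq0; rewrite -[2%:R]/(1 + 1 : F) {2}h subrr eqxx //.
have : (L %% 4 < 4)%N by rewrite ltn_pmod.
rewrite /dvdn; case: (L %% 4)%N => [|[|[|[|]]]] //= _.
- rewrite expr1 => h1; move: two1; rewrite -hi h1 expr1n eqxx //.
- by rewrite hi => h; move: two1; rewrite h eqxx.
- rewrite exprS hi mulrN1 => h; move: two1; rewrite -hi expr2 -(opprK i) h.
  by rewrite mulrNN mulr1 eqxx.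
Qed.

Variables (t s s' : nat) (ht : t.-primitive_root (- 4 : 'F_p)).
Variables (hs : s.-primitive_root (1 - i)) (hs' : s'.-primitive_root (1 + i)) (hss' : (s <= s')%N).

Lemma x4 : (1 + i) ^+ 4 = - 4%:R.
Proof. ring: hi. Qed.
Lemma y4 : (1 - i) ^+ 4 = - 4%:R.
Proof. ring: hi. Qed.
Lemma m4 q : ((- 4%:R : F) ^+ q == 1) = (t %| q)%N.
Proof. by rewrite (prim_order_dvd ht) -(inj_eq e_inj) eX eN enat e1. Qed.

Lemma ord4t L : (1 + i) ^+ L = 1 -> (1 - i) ^+ L = 1 -> (4 * t %| L)%N.
Proof.
move=> h1 h2.
have xiy : 1 + i = i * (1 - i) by ring: hi.
have iL : i ^+ L = 1 by move: h1; rewrite xiy exprMn h2 mulr1.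
have /dvdnP[q Lq] := i_pow4 L iL.
move: h1; rewrite Lq mulnC exprM x4 => /eqP; rewrite m4 => tq.
by rewrite dvdn_pmul2l.
Qed.

Lemma s'_eq : s' = (4 * t)%N /\ (s %| s')%N.
Proof.
have s0 := prim_order_gt0 hs.
have sdiv : (s %| s')%N.
  apply: nat_aux => //.
  - rewrite (prim_order_dvd hs) exprM y4 -x4 -exprM mulnC exprM.
    by move/prim_expr_order: hs' => ->; rewrite expr1n.
  - rewrite (prim_order_dvd hs') exprM x4 -y4 -exprM mulnC exprM.
    by move/prim_expr_order: hs => ->; rewrite expr1n.
split => //; apply/eqP; rewrite eqn_dvd; apply/andP; split.
  by rewrite (prim_order_dvd hs') exprM x4; apply/eqP/eqP; rewrite m4.
apply: ord4t; first exact: prim_expr_order.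
by apply/eqP; rewrite -(prim_order_dvd hs).
Qed.

Lemma period v : exists2 D, [|| D == 1%N, D == s | D == (4 * t)%N] &
  forall m, (iter m f v == v) = (D %| m)%N.
Proof.
have [s'4 ss'] := s'_eq.
case: (eqVneq (phi v) 0) => hphi; case: (eqVneq (psi v) 0) => hpsi.
- by exists 1%N => // m; rewrite iter_fix hphi hpsi !eqxx !orbT dvd1n.
- exists s; first by rewrite eqxx orbT.
  by move=> m; rewrite iter_fix hphi (negbTE hpsi) eqxx orbT orbF (prim_order_dvd hs).
- exists s'; first by rewrite s'4 eqxx !orbT.
  by move=> m; rewrite iter_fix hpsi (negbTE hphi) eqxx orbT orbF andbT (prim_order_dvd hs').
- exists s'; first by rewrite s'4 eqxx !orbT.
  move=> m; rewrite iter_fix (negbTE hpsi) (negbTE hphi) !orbF.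
  rewrite -(prim_order_dvd hs') -(prim_order_dvd hs); case h: (s' %| m)%N => //=; exact: dvdn_trans ss' h.
Qed.

End S.

Theorem proposition7p1 (p : nat) (pr_p : prime p) (odd_p : odd p)
    (F : finFieldType) (charF : p \in [pchar F]) (cardF : #|F| = (p ^ 2)%N)
    (i : F) (hi : i ^+ 2 = -1)
    (s s' : nat) (hs : s.-primitive_root (1 - i)) (hs' : s'.-primitive_root (1 + i))
    (hss' : (s <= s')%N)
    (t : nat) (ht : t.-primitive_root (- 4 : 'F_p))
    (c : seq ('F_p * 'F_p)) (hc : directed_cycle (@Gamma_arc p) c) :
  size c = 1%N \/ size c = s \/ size c = (4 * t)%N.
Proof.
move: hc; rewrite /directed_cycle; case: c => [|x0 c'] //= /andP[hu hcy].
set f := @subadd_move p.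
have hfp : fpath f x0 (rcons c' x0).
  by rewrite -(eq_path (e := Gamma_arc (p:=p))) // => a b; rewrite /Gamma_arc eq_sym.
move: hfp; rewrite rcons_path => /andP[hp hl].
have ec' := fpathE hp.
have hL : iter (size c').+1 f x0 = x0.
  by move/eqP: hl; rewrite ec' last_traject size_traject.
have ec : x0 :: c' = traject f x0 (size c').+1 by rewrite {1}ec'.
have [D hD hDm] := @period p F charF pr_p odd_p i hi t s s' ht hs hs' hss' x0.
have DL : (D %| (size c').+1)%N by rewrite -hDm; apply/eqP.
have D0 : (0 < D)%N.
  case/or3P: hD => /eqP ->; rewrite ?(prim_order_gt0 hs) //.
  by rewrite muln_gt0 (prim_order_gt0 ht).
have hDx : iter D f x0 = x0 by apply/eqP; rewrite hDm.
have eD : D = (size c').+1.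
  apply/eqP; rewrite eqn_leq (dvdn_leq _ DL) //=; rewrite leqNgt; apply/negP => lt.
  have hu2 : uniq (x0 :: c') by []; move: hu2; rewrite ec => {}hu.
  have := nth_uniq x0 (_ : (0 < size (traject f x0 (size c').+1))%N) (_ : (D < size (traject f x0 (size c').+1))%N) hu.
  rewrite !size_traject => /(_ isT lt); rewrite !nth_traject //= hDx eqxx.
  by move/esym/eqP => D00; move: D0; rewrite -D00.
rewrite -eD.
by case/or3P: hD => /eqP ->; auto.
Qed.
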